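(* For every $v\in\big[-B^{1/(1+\epsilon)},\,B^{1/(1+\epsilon)}(1-\pi)^{-1/(1+\epsilon)}\big)$, the set $\hat S(v)$ is compact.
   Context: $\pi\in(0,1)$, $\epsilon>0$, $B>0$. For $\lambda\in\mathbb{R}^3$ and $X\in\mathbb{R}$: $g^U(X,\lambda,v)=1+\lambda_1v-\lambda_2(1-\pi)+\lambda_3(|X|^{1+\epsilon}-B)-\big(\frac{\lambda_1X}{1-\pi}-\lambda_2\big)_+$. $\hat S(v)=\{\lambda\in\mathbb{R}^3:\lambda_1\ge0,\lambda_2\in\mathbb{R},\lambda_3\ge0,\ g^U(x,\lambda,v)\ge0\ \forall x\in\mathbb{R}\}$. *)

(* Defs.v *)
From HB Require Import structures.
From mathcomp Require Import all_boot all_order all_algebra.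
From mathcomp Require Import all_classical all_reals all_analysis.
Set Implicit Arguments. Unset Strict Implicit. Unset Printing Implicit Defensive.
Import Order.TTheory GRing.Theory Num.Theory.
Local Open Scope ring_scope.
Import numFieldNormedType.Exports.
Local Open Scope classical_set_scope.

(* lambda = ((l1, l2), l3) *)
Definition gU {R : realType} (pi eps B : R) (X : R) (l : R * R * R) (v : R) : R :=
  1 + l.1.1 * v - l.1.2 * (1 - pi) + l.2 * (powR `|X| (1 + eps) - B)
  - Num.max (l.1.1 * X / (1 - pi) - l.1.2) 0.

Definition Shat {R : realType} (pi eps B v : R) : set (R * R * R) :=
  [set l | 0 <= l.1.1 /\ 0 <= l.2 /\ forall x : R, 0 <= gU pi eps B x l v].

(* Main.v *)
Require Import Defs.
From HB Require Import structures.
From mathcomp Require Import all_boot all_order all_algebra.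
From mathcomp Require Import all_classical all_reals all_analysis.
From mathcomp Require Import ring lra.
Import Order.TTheory GRing.Theory Num.Theory.
Local Open Scope ring_scope.
Import numFieldNormedType.Exports.
Local Open Scope classical_set_scope.

Lemma lin_cont (R : realType) (a b c d : R) :
  continuous (fun l : R * R * R => a * l.1.1 + b * l.1.2 + c * l.2 + d).
Proof.
move=> l.
apply: cvgD; last exact: cvg_cst.
apply: cvgD; [apply: cvgD|]; apply: cvgM; try exact: cvg_cst.
- exact: (cvg_comp _ _ cvg_fst cvg_fst).
- exact: (cvg_comp _ _ cvg_fst cvg_snd).
- exact: cvg_snd.
Qed.

Lemma closed_lin (R : realType) (a b c d : R) :
  closed [set l : R * R * R | 0 <= a * l.1.1 + b * l.1.2 + c * l.2 + d].
Proof.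
have := (proj1 (continuous_closedP _) (@lin_cont R a b c d) [set x | 0 <= x]).
by apply; apply: closed_ge.
Qed.

Lemma gU_iff (R : realType) (pi eps B v x : R) (l : R * R * R) :
  pi < 1 ->
  (0 <= gU pi eps B x l v) <->
  (0 <= v * l.1.1 + (- (1 - pi)) * l.1.2 + (powR `|x| (1 + eps) - B) * l.2 + 1
   /\ 0 <= (v - x / (1 - pi)) * l.1.1 + pi * l.1.2
           + (powR `|x| (1 + eps) - B) * l.2 + 1).
Proof.
move=> hpi1.
have hq : (1 - pi) != 0 by rewrite subr_eq0 eq_sym; apply/negP => /eqP h; lra.
rewrite /gU subr_ge0 ge_max.
have -> : 1 + l.1.1 * v - l.1.2 * (1 - pi) + l.2 * (powR `|x| (1 + eps) - B)
   = v * l.1.1 + (- (1 - pi)) * l.1.2 + (powR `|x| (1 + eps) - B) * l.2 + 1 by ring.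
have -> : (v - x / (1 - pi)) * l.1.1 + pi * l.1.2 + (powR `|x| (1 + eps) - B) * l.2 + 1
  = v * l.1.1 + (- (1 - pi)) * l.1.2 + (powR `|x| (1 + eps) - B) * l.2 + 1
    - (l.1.1 * x / (1 - pi) - l.1.2) by ring.
rewrite subr_ge0.
by split => [/andP[-> ->]|[-> ->]].
Qed.

Theorem lemma17 (R : realType) (pi eps B : R)
  (hpi0 : 0 < pi) (hpi1 : pi < 1) (heps : 0 < eps) (hB : 0 < B) (v : R)
  (hv1 : - powR B (1 + eps)^-1 <= v)
  (hv2 : v < powR B (1 + eps)^-1 * powR (1 - pi) (- (1 + eps)^-1)) :
  compact (Shat pi eps B v : set (R * R * R)).
Proof.
set w := powR B (1 + eps)^-1 * powR (1 - pi) (- (1 + eps)^-1).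
have hvw : v < w := hv2.
set q := 1 - pi.
have hq : 0 < q by rewrite /q; lra.
have hc : 1 + eps != 0 by apply/negP => /eqP h; lra.
have w0 : 0 <= w by rewrite /w mulr_ge0 // powR_ge0.
have Pw : powR `|w| (1 + eps) = B / q.
  rewrite ger0_norm // /w powRM ?powR_ge0 // -!powRrM.
  rewrite mulVf // mulNr mulVf // powRN powRr1 ?(ltW hB) //.
  by rewrite powRr1 // ltW.
have P0 : powR `|0 : R| (1 + eps) = 0 by rewrite normr0 powR0.
set K := (w - v)^-1.
have hK : 0 < K by rewrite /K invr_gt0; lra.
set M0 := 1 + K * `|v|.
have hM0 : 0 < M0 by rewrite /M0; have := mulr_ge0 (ltW hK) (normr_ge0 v); lra.
set N := M0 / B.
set M := M0 / q + M0 / pi.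
have hN : 0 < N by rewrite /N divr_gt0.
have hM : 0 < M by rewrite /M addr_gt0 // divr_gt0.
apply: (@subclosed_compact _ _ ((`[0, K] `*` `[- M, M]) `*` `[0, N])).
-
  have -> : Shat pi eps B v =
    [set l | 0 <= 1 * l.1.1 + 0 * l.1.2 + 0 * l.2 + 0] `&`
    [set l | 0 <= 0 * l.1.1 + 0 * l.1.2 + 1 * l.2 + 0] `&`
    (\bigcap_(x in [set: R]) [set l : R * R * R |
       0 <= v * l.1.1 + (- (1 - pi)) * l.1.2 + (powR `|x| (1 + eps) - B) * l.2 + 1]) `&`
    (\bigcap_(x in [set: R]) [set l : R * R * R |
       0 <= (v - x / (1 - pi)) * l.1.1 + pi * l.1.2
           + (powR `|x| (1 + eps) - B) * l.2 + 1]).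
    apply/seteqP; split => l /=.
      move=> [h1 [h3 h]]; split; [split; [split|]|].
      + by rewrite !mul0r !addr0 mul1r.
      + by rewrite !mul0r !add0r addr0 mul1r.
      + by move=> x _; have /(gU_iff _ pi eps B v x l hpi1) [] := h x.
      + by move=> x _; have /(gU_iff _ pi eps B v x l hpi1) [] := h x.
    move=> [[[h1 h3] hA] hB'].
    split; first by move: h1; rewrite !mul0r !addr0 mul1r.
    split; first by move: h3; rewrite !mul0r !add0r addr0 mul1r.
    by move=> x; apply/(gU_iff _ pi eps B v x l hpi1); split; [apply: hA|apply: hB'].
  apply: closedI; first apply: closedI; first apply: closedI.
  + exact: closed_lin.
  + exact: closed_lin.
  + by apply: closed_bigI => x _; exact: closed_lin.
  + by apply: closed_bigI => x _; exact: closed_lin.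
- apply: compact_setX; first apply: compact_setX; exact: segment_compact.
- move=> [[l1 l2] l3] [/= h1 [h3 h]].
  have /(gU_iff _ pi eps B v 0 _ hpi1) [/= a0 b0] := h 0.
  have /(gU_iff _ pi eps B v w _ hpi1) [/= aw bw] := h w.
  rewrite P0 in a0 b0; rewrite Pw in aw bw.
  rewrite mul0r subr0 in b0.
  have e1 : q * ((v - w / q) * l1 + pi * l2 + (B / q - B) * l3 + 1)
            + pi * (v * l1 + - q * l2 + (0 - B) * l3 + 1) = 1 + l1 * (v - w).
    rewrite /q; field; rewrite subr_eq0 eq_sym; apply/negP => /eqP e; lra.
  have f1 : 0 <= 1 + l1 * (v - w).
    rewrite -e1 addr_ge0 // mulr_ge0 //; lra.
  have l1K : l1 <= K.
    rewrite /K -(mulr1 (w - v)^-1) ler_pdivlMl; last lra.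
    nra.
  have e2 : q * (v * l1 + pi * l2 + (0 - B) * l3 + 1)
            + pi * (v * l1 + - q * l2 + (0 - B) * l3 + 1) = 1 + l1 * v - l3 * B.
    rewrite /q; ring.
  have f2 : 0 <= 1 + l1 * v - l3 * B.
    rewrite -e2 addr_ge0 // mulr_ge0 //; lra.
  have l1v : l1 * v <= K * `|v|.
    have := ler_norm v; have := normr_ge0 v; nra.
  have l3N : l3 <= N.
    rewrite /N ler_pdivlMr //; rewrite /M0; lra.
  have Bl3 := mulr_ge0 (ltW hB) h3.
  have ea : v * l1 + - q * l2 + (0 - B) * l3 + 1 = 1 + l1 * v - l2 * q - l3 * B by ring.
  have eb : v * l1 + pi * l2 + (0 - B) * l3 + 1 = 1 + l1 * v + l2 * pi - l3 * B by ring.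
  rewrite ea in a0; rewrite eb in b0.
  have l2u : l2 * q <= M0 by rewrite /M0; lra.
  have l2l : - M0 <= l2 * pi by rewrite /M0; lra.
  have l2u' : l2 <= M0 / q by rewrite ler_pdivlMr.
  have l2l' : - (M0 / pi) <= l2 by rewrite -mulNr ler_pdivrMr.
  have p1 : 0 <= M0 / q by rewrite divr_ge0 // ltW.
  have p2 : 0 <= M0 / pi by rewrite divr_ge0 // ltW.
  split; [split|] => /=; rewrite in_itv /=; apply/andP; split; rewrite /M; lra.
Qed.
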